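(* Let $U$ be a nonconstant stationary solution. If the derivative $U_x$ has at least three zeros in $[0,1)$, then $U$ is linearly unstable.
   Context: $\mathbb{T}=[0,1]$ with endpoints identified; $D,\kappa>0$; stationary solutions $U\in W^{2,2}(\mathbb{T})$ solve $0=DU_{xx}-U+\kappa e^U/\int_0^1e^Udy$ with periodic boundary conditions. Linearization: $\mathcal L\varphi=D\varphi_{xx}+\big(\kappa\frac{e^U}{\int_0^1e^U}-1\big)\varphi-\kappa\frac{e^U}{(\int_0^1e^U)^2}\int_0^1e^U\varphi\,dy$ on $L^2(\mathbb{T})$, domain $W^{2,2}(\mathbb{T})$. $U$ is linearly unstable if $\mathcal L$ has an eigenvalue with positive real part. *)

(* Defs.v *)
From Stdlib Require Import Reals.
From Coquelicot Require Import Coquelicot.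
Open Scope R_scope.

(* Functions on the torus T = [0,1] with endpoints identified are modelled
   as 1-periodic functions on R. *)
Definition periodic1 (f : R -> R) : Prop := forall x, f (x + 1) = f x.
Definition periodic1C (f : R -> C) : Prop := forall x, f (x + 1) = f x.

Definition massU (U : R -> R) : R := RInt (fun y => exp (U y)) 0 1.

Definition stationary_solution (D kappa : R) (U : R -> R) : Prop :=
  periodic1 U /\
  (forall x, ex_derive U x) /\
  (forall x, ex_derive (Derive U) x) /\
  (forall x, D * Derive_n U 2 x - U x + kappa * exp (U x) / massU U = 0).

Definition CInt01 (f : R -> C) : C := @RInt C_R_CompleteNormedModule f 0 1.

(* The linearization applied to phi, given its second derivative phi2:
   L phi = D phi_xx + (kappa e^U/M - 1) phi - kappa e^U/M^2 \int_0^1 e^U phi *)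
Definition Lop (D kappa : R) (U : R -> R) (phi phi2 : R -> C) (x : R) : C :=
  Cminus
    (Cplus (Cmult (RtoC D) (phi2 x))
           (Cmult (RtoC (kappa * exp (U x) / massU U - 1)) (phi x)))
    (Cmult (RtoC (kappa * exp (U x) / (massU U ^ 2)))
           (CInt01 (fun y => Cmult (RtoC (exp (U y))) (phi y)))).

Definition is_eigenvalue_L (D kappa : R) (U : R -> R) (lam : C) : Prop :=
  exists phi phi1 phi2 : R -> C,
    periodic1C phi /\
    (exists x, phi x <> RtoC 0) /\
    (forall x, @is_derive R_AbsRing C_R_NormedModule phi x (phi1 x)) /\
    (forall x, @is_derive R_AbsRing C_R_NormedModule phi1 x (phi2 x)) /\
    (forall x, Lop D kappa U phi phi2 x = Cmult lam (phi x)).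

Definition linearly_unstable (D kappa : R) (U : R -> R) : Prop :=
  exists lam : C, 0 < Re lam /\ is_eigenvalue_L D kappa U lam.

(* Main.v *)
Require Import Defs.
From Stdlib Require Import Reals.
From Coquelicot Require Import Coquelicot.
From Stdlib Require Import Lra Psatz Factorial.
From Stdlib Require Import Ranalysis5 PSeries_reg ClassicalEpsilon FunctionalExtensionality Classical.
Open Scope R_scope.

Ltac der_rw H := match type of H with is_derive ?f ?x ?l =>
  match goal with |- context [Derive ?g x] =>
    replace (Derive g x) with l by (symmetry; apply is_derive_unique; exact H) end end.

Lemma mono_deriv (f df : R -> R) a b : a <= b ->
  (forall x, a <= x <= b -> is_derive f x (df x)) ->
  (forall x, a <= x <= b -> 0 <= df x) -> f a <= f b.
Proof.
  intros Hab Hd Hp.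
  destruct (MVT_gen f a b df) as [c [Hc Heq]].
  - intros x Hx. rewrite Rmin_left, Rmax_right in Hx by lra. apply Hd; lra.
  - intros x Hx. rewrite Rmin_left, Rmax_right in Hx by lra.
    apply continuity_pt_filterlim. apply (ex_derive_continuous f).
    exists (df x). apply Hd; lra.
  - rewrite Rmin_left, Rmax_right in Hc by lra.
    assert (0 <= df c) by (apply Hp; lra). nra.
Qed.

Lemma deriv_refl (f f' : R -> R) s : is_derive f (-s) (f' (-s)) ->
  is_derive (fun s => f (-s)) s (- f' (-s)).
Proof.
  intros H.
  apply is_derive_Reals. apply is_derive_Reals in H.
  replace (- f' (- s)) with (-1 * f' (-s)) by ring.
  rewrite Rmult_comm.
  apply (derivable_pt_lim_comp (fun x => - x) f).
  - apply derivable_pt_lim_opp with (f := id). apply derivable_pt_lim_id.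
  - exact H.
Qed.

Lemma deriv_shift (f f' : R -> R) a s : is_derive f (a + s) (f' (a + s)) ->
  is_derive (fun s => f (a + s)) s (f' (a + s)).
Proof.
  intros H.
  apply is_derive_Reals. apply is_derive_Reals in H.
  replace (f' (a + s)) with (f' (a + s) * 1) by ring.
  apply (derivable_pt_lim_comp (fun x => a + x) f).
  - replace 1 with (0 + 1) by ring. apply (derivable_pt_lim_plus (fun _ => a) id).
    apply derivable_pt_lim_const. apply derivable_pt_lim_id.
  - exact H.
Qed.

Lemma gronwall (E dE : R -> R) (A c T : R) : 0 < A ->
  (forall t, 0 <= t <= T -> is_derive E t (dE t)) ->
  (forall t, 0 <= t <= T -> dE t <= A * E t + c) ->
  forall t, 0 <= t <= T -> E t + c / A <= (E 0 + c / A) * exp (A * t).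
Proof.
  intros HA Hd Hb t Ht.
  set (F := fun s => - ((E s + c / A) * exp (- A * s))).
  assert (HF : F 0 <= F t).
  { apply (mono_deriv F (fun s => exp (- A * s) * (A * E s + c - dE s))). lra.
    - intros x Hx. unfold F.
      assert (HE : is_derive E x (dE x)) by (apply Hd; lra).
      auto_derive. exists (dE x); exact HE.
      der_rw HE. field. lra.
    - intros x Hx. apply Rmult_le_pos. left; apply exp_pos.
      assert (dE x <= A * E x + c) by (apply Hb; lra). lra. }
  unfold F in HF. rewrite Rmult_0_r, exp_0, Rmult_1_r in HF.
  assert (He : exp (- A * t) * exp (A * t) = 1).
  { rewrite <- exp_plus. replace (- A * t + A * t) with 0 by ring. apply exp_0. }
  assert (Hp : 0 < exp (A * t)) by apply exp_pos.
  assert (H1 : (E t + c / A) * exp (- A * t) <= E 0 + c / A) by lra.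
  apply Rmult_le_compat_r with (r := exp (A * t)) in H1; [|lra].
  rewrite Rmult_assoc, He, Rmult_1_r in H1. exact H1.
Qed.

Lemma abs_prod_bound (a b K : R) : 0 <= K -> Rabs b <= K * Rabs a ->
  forall w1, 2 * (w1 * b) <= K * (a * a + w1 * w1).
Proof.
  intros HK Hb w1.
  assert (H1 : w1 * b <= Rabs w1 * Rabs b).
  { rewrite <- Rabs_mult. apply Rle_abs. }
  assert (H2 : Rabs w1 * Rabs b <= Rabs w1 * (K * Rabs a)).
  { apply Rmult_le_compat_l. apply Rabs_pos. exact Hb. }
  assert (H3 : 2 * (Rabs w1 * Rabs a) <= a * a + w1 * w1).
  { assert (Ha: Rabs a * Rabs a = a * a) by (rewrite <- Rabs_mult; apply Rabs_pos_eq; nra).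
    assert (Hw: Rabs w1 * Rabs w1 = w1 * w1) by (rewrite <- Rabs_mult; apply Rabs_pos_eq; nra).
    pose proof (Rle_0_sqr (Rabs w1 - Rabs a)) as Hs; unfold Rsqr in Hs; nra. }
  nra.
Qed.

Lemma uniq_fwd (w w1 w2 : R -> R) K T : 0 <= K ->
  (forall t, 0 <= t <= T -> is_derive w t (w1 t) /\ is_derive w1 t (w2 t) /\
        Rabs (w2 t) <= K * Rabs (w t)) ->
  w 0 = 0 -> w1 0 = 0 -> forall t, 0 <= t <= T -> w t = 0.
Proof.
  intros HK H H0 H10 t Ht.
  pose proof (gronwall (fun s => w s * w s + w1 s * w1 s)
     (fun s => 2 * (w s * w1 s) + 2 * (w1 s * w2 s)) (K + 1) 0 T) as G.
  assert (HG : forall s, 0 <= s <= T -> w s * w s + w1 s * w1 s + 0 / (K+1) <=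
      (w 0 * w 0 + w1 0 * w1 0 + 0 / (K+1)) * exp ((K+1) * s)).
  { apply G. lra.
    - intros s Hs. destruct (H s Hs) as [Ha [Hb _]].
      auto_derive. split. exists (w1 s); exact Ha. split. exists (w1 s); exact Ha.
      split; [exists (w2 s); exact Hb|]. split; [exists (w2 s); exact Hb|]. exact I.
      der_rw Ha. der_rw Hb. ring.
    - intros s Hs. destruct (H s Hs) as [_ [_ Hc]].
      pose proof (abs_prod_bound (w s) (w2 s) K HK Hc (w1 s)).
      pose proof (Rle_0_sqr (w s - w1 s)) as Hs2; unfold Rsqr in Hs2; nra. }
  specialize (HG t Ht). rewrite H0, H10 in HG.
  replace (0 / (K+1)) with 0 in HG by (unfold Rdiv; ring).
  rewrite Rmult_0_l, !Rplus_0_r in HG. nra.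
Qed.

Lemma uniq2 (w w1 w2 : R -> R) :
  (forall t, is_derive w t (w1 t)) -> (forall t, is_derive w1 t (w2 t)) ->
  (forall T, 0 <= T -> exists K, 0 <= K /\ forall t, -T <= t <= T -> Rabs (w2 t) <= K * Rabs (w t)) ->
  w 0 = 0 -> w1 0 = 0 -> forall t, w t = 0.
Proof.
  intros Hd1 Hd2 HK H0 H10 t.
  destruct (Rle_dec 0 t) as [Ht|Ht].
  - destruct (HK t Ht) as [K [HK0 HKb]].
    apply (uniq_fwd w w1 w2 K t HK0); try lra; auto.
    intros s Hs. split; [|split]; auto. apply HKb; lra.
  - destruct (HK (-t) ltac:(lra)) as [K [HK0 HKb]].
    replace t with (- - t) by ring.
    apply (uniq_fwd (fun s => w (-s)) (fun s => - w1 (-s)) (fun s => w2 (-s)) K (-t) HK0);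
      try lra.
    + intros s Hs. split; [|split].
      * apply (deriv_refl w w1). apply Hd1.
      * replace (w2 (-s)) with (- - w2 (-s)) by ring.
        apply is_derive_Reals. apply derivable_pt_lim_opp with (f := fun s => w1 (-s)).
        apply is_derive_Reals. apply (deriv_refl w1 w2). apply Hd2.
      * apply HKb; lra.
    + replace (-0) with 0 by ring. exact H0.
    + replace (-0) with 0 by ring. rewrite H10. ring.
Qed.


Lemma is_derive_powS (c : R) m x : 
  is_derive (fun u => c * u ^ (S m) / INR (fact (S m))) x (c * x ^ m / INR (fact m)).
Proof.
  apply is_derive_Reals.
  assert (Hf : INR (fact m) <> 0) by (apply not_0_INR; apply fact_neq_0).
  replace (c * x ^ m / INR (fact m)) with (c / INR (fact (S m)) * (INR (S m) * x ^ Init.Nat.pred (S m))).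
  2:{ rewrite fact_simpl, mult_INR. simpl pred. field. split; auto. apply not_0_INR; lia. }
  apply (derivable_pt_lim_ext (fun u => c / INR (fact (S m)) * u ^ (S m))).
  { intros; unfold Rdiv; ring. }
  apply derivable_pt_lim_scal. apply derivable_pt_lim_pow.
Qed.

Lemma is_derive_powS_neg (c : R) m x : 
  is_derive (fun u => c * (- u) ^ (S m) / INR (fact (S m))) x (- (c * (-x) ^ m / INR (fact m))).
Proof.
  pose proof (deriv_refl (fun u => c * u ^ (S m) / INR (fact (S m))) (fun u => c * u ^ m / INR (fact m)) x) as H.
  apply H. apply is_derive_powS.
Qed.

Lemma deriv_bound (G g : R -> R) c m t : G 0 = 0 ->
  (forall u, Rmin 0 t <= u <= Rmax 0 t -> is_derive G u (g u)) ->
  (forall u, Rmin 0 t <= u <= Rmax 0 t -> Rabs (g u) <= c * Rabs u ^ m / INR (fact m)) ->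
  Rabs (G t) <= c * Rabs t ^ (S m) / INR (fact (S m)).
Proof.
  intros H0 Hd Hb.
  assert (Hf : forall k, 0 < INR (fact k)) by (intros; apply lt_0_INR; apply lt_O_fact).
  destruct (Rle_dec 0 t) as [Ht|Ht].
  - rewrite Rmin_left, Rmax_right in Hd, Hb by lra.
    rewrite (Rabs_pos_eq t Ht).
    set (H := fun u => c * u ^ (S m) / INR (fact (S m))).
    assert (A1 : (H 0 - G 0) <= H t - G t).
    { apply (mono_deriv (fun u => H u - G u) (fun u => c * u ^ m / INR (fact m) - g u)); [lra| |].
      - intros x Hx. apply is_derive_Reals. apply derivable_pt_lim_minus; apply is_derive_Reals.
        apply is_derive_powS. apply Hd; lra.
      - intros x Hx. pose proof (Hb x Hx). rewrite (Rabs_pos_eq x) in H1 by lra.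
        pose proof (Rle_abs (g x)). lra. }
    assert (A2 : (H 0 + G 0) <= H t + G t).
    { apply (mono_deriv (fun u => H u + G u) (fun u => c * u ^ m / INR (fact m) + g u)); [lra| |].
      - intros x Hx. apply is_derive_Reals. apply derivable_pt_lim_plus; apply is_derive_Reals.
        apply is_derive_powS. apply Hd; lra.
      - intros x Hx. pose proof (Hb x Hx). rewrite (Rabs_pos_eq x) in H1 by lra.
        pose proof (Rle_abs (- g x)). rewrite Rabs_Ropp in H2. lra. }
    unfold H in A1, A2. rewrite pow_i in A1, A2 by lia.
    rewrite H0 in A1, A2. unfold Rdiv in *. rewrite Rmult_0_r, Rmult_0_l in A1, A2.
    apply Rabs_le. lra.
  - rewrite Rmin_right, Rmax_left in Hd, Hb by lra.
    rewrite (Rabs_left t) by lra.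
    set (H := fun u => c * (- u) ^ (S m) / INR (fact (S m))).
    assert (A1 : (G t - H t) <= G 0 - H 0).
    { apply (mono_deriv (fun u => G u - H u) (fun u => g u - - (c * (-u) ^ m / INR (fact m)))); [lra| |].
      - intros x Hx. apply is_derive_Reals. apply derivable_pt_lim_minus; apply is_derive_Reals.
        apply Hd; lra. apply is_derive_powS_neg.
      - intros x Hx. pose proof (Hb x Hx). rewrite (Rabs_left1 x) in H1 by lra.
        pose proof (Rle_abs (- g x)). rewrite Rabs_Ropp in H2. lra. }
    assert (A2 : - (G t + H t) <= - (G 0 + H 0)).
    { apply (mono_deriv (fun u => - (G u + H u)) (fun u => - (g u + - (c * (-u) ^ m / INR (fact m))))); [lra| |].
      - intros x Hx. apply is_derive_Reals. apply derivable_pt_lim_opp. apply derivable_pt_lim_plus; apply is_derive_Reals.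
        apply Hd; lra. apply is_derive_powS_neg.
      - intros x Hx. pose proof (Hb x Hx). rewrite (Rabs_left1 x) in H1 by lra.
        pose proof (Rle_abs (g x)). lra. }
    unfold H in A1, A2. replace (-0) with 0 in A1, A2 by ring. rewrite pow_i in A1, A2 by lia.
    rewrite H0 in A1, A2. unfold Rdiv in *. rewrite Rmult_0_r, Rmult_0_l in A1, A2.
    apply Rabs_le. lra.
Qed.


Fixpoint itr (p : R -> R) (n : nat) : (R -> R) * (R -> R) :=
  match n with
  | O => (fun _ => 0, fun _ => 0)
  | S m => let V := fun t => 1 + RInt (fun u => p u * fst (itr p m) u) 0 t in
           (fun t => RInt V 0 t, V)
  end.

Lemma deriv_int (f : R -> R) : (forall x, continuous f x) -> forall t, is_derive (fun t => RInt f 0 t) t (f t).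
Proof.
  intros Hc t. apply (is_derive_RInt f (fun t => RInt f 0 t) 0 t).
  apply filter_forall. intros b.
  exact (@RInt_correct R_CompleteNormedModule f 0 b (@ex_RInt_continuous R_CompleteNormedModule f 0 b (fun z _ => Hc z))).
  apply Hc.
Qed.

Lemma deriv_cont (f f' : R -> R) x : is_derive f x (f' x) -> continuous f x.
Proof. intros H. apply (@ex_derive_continuous R_AbsRing R_NormedModule). exists (f' x). exact H. Qed.

Lemma cont_mult (f g : R -> R) x : continuous f x -> continuous g x -> continuous (fun y => f y * g y) x.
Proof. intros; apply (@continuous_mult R_UniformSpace R_AbsRing f g); auto. Qed.

Lemma itr_props (p : R -> R) (Hp : forall x, continuous p x) n :
  (forall t, is_derive (fst (itr p n)) t (snd (itr p n) t)) /\
  (forall t, is_derive (snd (itr p (S n))) t (p t * fst (itr p n) t)).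
Proof.
  assert (HV : forall m, (forall t, continuous (fst (itr p m)) t) ->
     forall t, is_derive (snd (itr p (S m))) t (p t * fst (itr p m) t)).
  { intros m Hm t. simpl.
    apply is_derive_Reals.
    replace (p t * fst (itr p m) t) with (0 + p t * fst (itr p m) t) by ring.
    apply (derivable_pt_lim_plus (fun _ => 1) (fun t => RInt (fun u => p u * fst (itr p m) u) 0 t)).
    apply derivable_pt_lim_const. apply is_derive_Reals.
    apply (deriv_int (fun u => p u * fst (itr p m) u)).
    intros x. apply cont_mult; auto. }
  induction n.
  - split.
    + intros t. simpl. apply is_derive_Reals; apply derivable_pt_lim_const.
    + apply HV. intros t. simpl. apply (@continuous_const R_UniformSpace R_UniformSpace).
  - destruct IHn as [H1 H2]. split.
    + intros t. simpl. apply (deriv_int (snd (itr p (S n)))).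
      intros x. apply (deriv_cont _ (fun t => p t * fst (itr p n) t)). apply H2.
    + apply HV. intros t.
      apply (deriv_cont _ (snd (itr p (S n)))).
      simpl. apply (deriv_int (snd (itr p (S n)))).
      intros x. apply (deriv_cont _ (fun t => p t * fst (itr p n) t)). apply H2.
Qed.

Definition dY (p : R -> R) n t := fst (itr p (S n)) t - fst (itr p n) t.
Definition dV (p : R -> R) n t := snd (itr p (S n)) t - snd (itr p n) t.

Lemma itrY0 p n : fst (itr p n) 0 = 0.
Proof. destruct n; simpl. reflexivity. rewrite RInt_point. reflexivity. Qed.

Lemma itrV0 p n : snd (itr p (S n)) 0 = 1.
Proof. simpl. rewrite RInt_point. unfold zero; simpl. ring. Qed.

Lemma itrV1 p t : snd (itr p 1) t = 1.
Proof.
  simpl. rewrite (RInt_ext _ (fun _ => 0)). rewrite RInt_const.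
  unfold scal; simpl; unfold mult; simpl. ring.
  intros; simpl; ring.
Qed.

Lemma itr_bound (p : R -> R) (Hp : forall x, continuous p x) K r : 0 <= K ->
  (forall u, -r <= u <= r -> Rabs (p u) <= K) ->
  forall n t, -r <= t <= r ->
   Rabs (dV p n t) <= K ^ n * Rabs t ^ (2 * n) / INR (fact (2 * n)) /\
   Rabs (dY p n t) <= K ^ n * Rabs t ^ (S (2 * n)) / INR (fact (S (2 * n))).
Proof.
  intros HK Hb.
  assert (Hd : forall n t, is_derive (dY p n) t (dV p n t)).
  { intros n t. unfold dY, dV. apply is_derive_Reals. apply derivable_pt_lim_minus;
    apply is_derive_Reals; apply (itr_props p Hp). }
  assert (Hd2 : forall n t, is_derive (dV p (S n)) t (p t * dY p n t)).
  { intros n t. unfold dY, dV.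
    replace (p t * (fst (itr p (S n)) t - fst (itr p n) t)) with
      (p t * fst (itr p (S n)) t - p t * fst (itr p n) t) by ring.
    apply is_derive_Reals. apply derivable_pt_lim_minus;
    apply is_derive_Reals; apply (itr_props p Hp). }
  assert (HdV0 : forall n, dV p (S n) 0 = 0).
  { intros n; unfold dV. rewrite !itrV0. ring. }
  assert (HdY0 : forall n, dY p n 0 = 0).
  { intros n; unfold dY. rewrite !itrY0. ring. }
  assert (Hbtw : forall t u, -r <= t <= r -> Rmin 0 t <= u <= Rmax 0 t -> -r <= u <= r /\ Rabs u <= Rabs t).
  { intros t u Ht Hu. unfold Rmin, Rmax in Hu. destruct (Rle_dec 0 t).
    - rewrite !Rabs_pos_eq by lra. lra.
    - rewrite !Rabs_left1 by lra. lra. }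
  induction n; intros t Ht.
  - assert (A : Rabs (dV p 0 t) <= K ^ 0 * Rabs t ^ (2 * 0) / INR (fact (2 * 0))).
    { unfold dV. rewrite itrV1. simpl. rewrite Rminus_0_r, Rabs_R1. lra. }
    split. exact A.
    apply (deriv_bound (dY p 0) (dV p 0)). apply HdY0. intros; apply Hd.
    intros u Hu. unfold dV. rewrite itrV1. simpl. rewrite Rminus_0_r, Rabs_R1. lra.
  - assert (A : forall t, -r <= t <= r -> Rabs (dV p (S n) t) <= K ^ S n * Rabs t ^ (2 * S n) / INR (fact (2 * S n))).
    { clear t Ht; intros t Ht. replace (2 * S n)%nat with (S (S (2 * n))) by lia.
      apply (deriv_bound (dV p (S n)) (fun t => p t * dY p n t)). apply HdV0. intros; apply Hd2.
      intros u Hu. destruct (Hbtw t u Ht Hu) as [Hu1 Hu2].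
      destruct (IHn u Hu1) as [_ B].
      rewrite Rabs_mult. simpl pow.
      assert (0 <= Rabs u ^ S (2 * n) / INR (fact (S (2 * n)))).
      { apply Rmult_le_pos. apply pow_le, Rabs_pos. left; apply Rinv_0_lt_compat, lt_0_INR, lt_O_fact. }
      assert (Rabs u ^ S (2 * n) <= Rabs t ^ S (2 * n)) by (apply pow_incr; split; [apply Rabs_pos|lra]).
      assert (0 < / INR (fact (S (2 * n)))) by (apply Rinv_0_lt_compat, lt_0_INR, lt_O_fact).
      assert (0 <= K ^ n) by (apply pow_le; lra).
      pose proof (Rabs_pos (p u)). pose proof (Rabs_pos (dY p n u)).
      pose proof (Hb u Hu1).
      unfold Rdiv in *.
      apply Rle_trans with (K * (K ^ n * Rabs u ^ S (2 * n) * / INR (fact (S (2 * n))))).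
      apply Rmult_le_compat; auto.
      right; simpl; ring. }
    split. apply A; exact Ht.
    apply (deriv_bound (dY p (S n)) (dV p (S n))). apply HdY0. intros; apply Hd.
    intros u Hu. destruct (Hbtw t u Ht Hu) as [Hu1 Hu2].
    apply A; exact Hu1.
Qed.

Lemma tb K r y n e : 0 <= K -> 0 <= r -> Rabs y <= r -> (e <= 1)%nat ->
  K ^ n * Rabs y ^ (2 * n + e) / INR (fact (2 * n + e)) <= (r + 1) * (K * r * r) ^ n / INR (fact n).
Proof.
  intros HK Hr Hy He.
  assert (H1 : Rabs y ^ (2 * n + e) <= (r + 1) * (r * r) ^ n).
  { apply Rle_trans with (r ^ (2 * n + e)). apply pow_incr; split; [apply Rabs_pos|lra].
    rewrite pow_add, pow_mult. replace (r ^ 2) with (r * r) by (simpl; ring).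
    rewrite Rmult_comm. apply Rmult_le_compat_r. apply pow_le. nra.
    destruct e as [|[|e]]; simpl; lra || lia. }
  assert (H2 : / INR (fact (2 * n + e)) <= / INR (fact n)).
  { apply Rinv_le_contravar. apply lt_0_INR, lt_O_fact. apply le_INR, fact_le. lia. }
  assert (H3 : 0 <= K ^ n) by (apply pow_le; lra).
  assert (H4 : 0 <= / INR (fact (2 * n + e))) by (left; apply Rinv_0_lt_compat, lt_0_INR, lt_O_fact).
  unfold Rdiv. rewrite !Rpow_mult_distr.
  apply Rle_trans with (K ^ n * ((r + 1) * (r * r) ^ n) * / INR (fact (2 * n + e))).
  apply Rmult_le_compat_r; auto. apply Rmult_le_compat_l; auto.
  replace ((r + 1) * (K ^ n * r ^ n * r ^ n) * / INR (fact n)) with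
     (K ^ n * ((r + 1) * (r * r) ^ n) * / INR (fact n)) by (rewrite Rpow_mult_distr; ring).
  apply Rmult_le_compat_l; auto. apply Rmult_le_pos; auto. apply Rmult_le_pos. lra. apply pow_le; nra.
Qed.

Lemma exp_cv x : Un_cv (fun n => sum_f_R0 (fun k => x ^ k / INR (fact k)) n) (exp x).
Proof.
  pose proof (proj2_sig (exist_exp x)) as H. unfold exp_in, infinite_sum in H.
  unfold exp. intros eps He. destruct (H eps He) as [N HN]. exists N. intros n Hn.
  rewrite (sum_eq _ (fun i => / INR (fact i) * x ^ i)). apply HN; auto.
  intros; unfold Rdiv; ring.
Qed.

Lemma cv_scal a u l : Un_cv u l -> Un_cv (fun n => a * u n) (a * l).
Proof.
  intros H. apply (CV_mult (fun _ => a) u a l); auto.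
  intros eps He. exists 0%nat. intros. unfold Rdist. rewrite Rminus_diag, Rabs_R0. lra.
Qed.

Lemma cv_series_bound K r : 0 <= K -> 0 <= r ->
  Un_cv (fun n => sum_f_R0 (fun k => Rabs ((r + 1) * (K * r * r) ^ k / INR (fact k))) n) ((r + 1) * exp (K * r * r)).
Proof.
  intros HK Hr. intros eps He.
  destruct (cv_scal (r + 1) _ _ (exp_cv (K * r * r)) eps He) as [N HN].
  exists N. intros n Hn. specialize (HN n Hn). rewrite scal_sum in HN.
  rewrite (sum_eq _ (fun i => (K * r * r) ^ i / INR (fact i) * (r + 1))). exact HN.
  intros i _. rewrite Rabs_pos_eq. unfold Rdiv; ring.
  apply Rmult_le_pos. apply Rmult_le_pos. lra. apply pow_le. nra.
  left; apply Rinv_0_lt_compat, lt_0_INR, lt_O_fact.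
Qed.

Lemma Kexists (p : R -> R) (Hp : forall x, continuous p x) (r : R) :
  exists K, 0 <= K /\ forall u, -r <= u <= r -> Rabs (p u) <= K.
Proof.
  destruct (Rle_dec (-r) r) as [Hr|Hr].
  - destruct (continuity_ab_maj (fun u => Rabs (p u)) (-r) r Hr) as [M [HM _]].
    + intros c _. apply (continuity_pt_comp p Rabs). apply continuity_pt_filterlim, Hp.
      apply Rcontinuity_abs.
    + exists (Rabs (p M)). split. apply Rabs_pos. exact HM.
  - exists 0. split. lra. intros; lra.
Qed.

Lemma SP_dY p n x : SP (dY p) n x = fst (itr p (S n)) x.
Proof.
  induction n; unfold SP in *; simpl sum_f_R0.
  - unfold dY. simpl fst at 2. ring.
  - rewrite IHn. unfold dY. ring.
Qed.

Lemma SP_dV p n x : SP (dV p) n x = snd (itr p (S n)) x.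
Proof.
  induction n; unfold SP in *; simpl sum_f_R0.
  - unfold dV. simpl snd at 2. ring.
  - rewrite IHn. unfold dV. ring.
Qed.

Theorem ode_exists (p : R -> R) : (forall x, continuous p x) ->
  exists y v : R -> R, (forall t, is_derive y t (v t)) /\
    (forall t, is_derive v t (p t * y t)) /\ y 0 = 0 /\ v 0 = 1.
Proof.
  intros Hp.
  pose (Kf := fun r : R => constructive_indefinite_description _ (Kexists p Hp r)).
  assert (CVNY : CVN_R (dY p)).
  { intros r. set (K := proj1_sig (Kf r)). destruct (proj2_sig (Kf r)) as [HK HKb]. fold K in HK, HKb.
    exists (fun n => (r + 1) * (K * r * r) ^ n / INR (fact n)).
    exists ((r + 1) * exp (K * r * r)). split.
    apply cv_series_bound; auto. left; apply cond_pos.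
    intros n y Hy. unfold Boule in Hy. rewrite Rminus_0_r in Hy.
    assert (Hy' : -r <= y <= r) by (apply Rabs_lt_between in Hy; lra).
    destruct (itr_bound p Hp K r HK HKb n y Hy') as [_ B].
    eapply Rle_trans. exact B. replace (S (2 * n)) with (2 * n + 1)%nat by lia.
    apply tb; auto. left; apply cond_pos. lra. }
  assert (CVNV : CVN_R (dV p)).
  { intros r. set (K := proj1_sig (Kf r)). destruct (proj2_sig (Kf r)) as [HK HKb]. fold K in HK, HKb.
    exists (fun n => (r + 1) * (K * r * r) ^ n / INR (fact n)).
    exists ((r + 1) * exp (K * r * r)). split.
    apply cv_series_bound; auto. left; apply cond_pos.
    intros n y Hy. unfold Boule in Hy. rewrite Rminus_0_r in Hy.
    assert (Hy' : -r <= y <= r) by (apply Rabs_lt_between in Hy; lra).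
    destruct (itr_bound p Hp K r HK HKb n y Hy') as [B _].
    eapply Rle_trans. exact B. replace (2 * n)%nat with (2 * n + 0)%nat by lia.
    apply tb; auto. left; apply cond_pos. lra. }
  set (cvY := CVN_R_CVS _ CVNY). set (cvV := CVN_R_CVS _ CVNV).
  set (Ys := SFL (dY p) cvY). set (Vs := SFL (dV p) cvV).
  assert (EY : forall n, SP (dY p) n = fst (itr p (S n))).
  { intros n; apply functional_extensionality; intros; apply SP_dY. }
  assert (EV : forall n, SP (dV p) n = snd (itr p (S n))).
  { intros n; apply functional_extensionality; intros; apply SP_dV. }
  assert (cY : forall y, Un_cv (fun n => fst (itr p (S n)) y) (Ys y)).
  { intros y. unfold Ys, SFL. destruct (cvY y) as [l Hl]. intros eps He.
    destruct (Hl eps He) as [N HN]. exists N. intros n Hn. rewrite <- SP_dY. apply HN; auto. }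
  assert (cV : forall y, Un_cv (fun n => snd (itr p (S n)) y) (Vs y)).
  { intros y. unfold Vs, SFL. destruct (cvV y) as [l Hl]. intros eps He.
    destruct (Hl eps He) as [N HN]. exists N. intros n Hn. rewrite <- SP_dV. apply HN; auto. }
  assert (uY : forall r : posreal, CVU (fun n => fst (itr p (S n))) Ys 0 r).
  { intros r. pose proof (CVN_CVU _ cvY r (CVNY r)) as H. intros eps He.
    destruct (H eps He) as [N HN]. exists N. intros n y Hn Hy. rewrite <- SP_dY. apply HN; auto. }
  assert (uV : forall r : posreal, CVU (fun n => snd (itr p (S n))) Vs 0 r).
  { intros r. pose proof (CVN_CVU _ cvV r (CVNV r)) as H. intros eps He.
    destruct (H eps He) as [N HN]. exists N. intros n y Hn Hy. rewrite <- SP_dV. apply HN; auto. }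
  assert (contY : forall n y, continuity_pt (fst (itr p n)) y).
  { intros n y. apply continuity_pt_filterlim. apply (deriv_cont _ (snd (itr p n))).
    apply (itr_props p Hp). }
  assert (contV : forall n y, continuity_pt (snd (itr p (S n))) y).
  { intros n y. apply continuity_pt_filterlim. apply (deriv_cont _ (fun t => p t * fst (itr p n) t)).
    apply (itr_props p Hp). }
  assert (Ball : forall x, Boule 0 (mkposreal (Rabs x + 1) ltac:(pose proof (Rabs_pos x); lra)) x).
  { intros x. unfold Boule. simpl. rewrite Rminus_0_r. lra. }
  assert (cYs : forall y, continuity_pt Ys y).
  { intros y. apply (CVU_continuity _ Ys 0 _ (uY (mkposreal (Rabs y + 1) ltac:(pose proof (Rabs_pos y); lra)))).
    intros; apply contY. apply Ball. }
  assert (cVs : forall y, continuity_pt Vs y).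
  { intros y. apply (CVU_continuity _ Vs 0 _ (uV (mkposreal (Rabs y + 1) ltac:(pose proof (Rabs_pos y); lra)))).
    intros; apply contV. apply Ball. }
  exists Ys, Vs. split; [|split; [|split]].
  - intros t. apply is_derive_Reals.
    apply (derivable_pt_lim_CVU (fun n => fst (itr p (S n))) (fun n => snd (itr p (S n))) Ys Vs t 0
      (mkposreal (Rabs t + 1) ltac:(pose proof (Rabs_pos t); lra))).
    + apply Ball.
    + intros y n _. apply is_derive_Reals. apply (itr_props p Hp).
    + intros y _. apply cY.
    + apply uV.
    + intros y _. apply cVs.
  - intros t. apply is_derive_Reals.
    set (r := mkposreal (Rabs t + 1) ltac:(pose proof (Rabs_pos t); lra)).
    apply (derivable_pt_lim_CVU (fun n => snd (itr p (S (S n)))) (fun n y => p y * fst (itr p (S n)) y)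
      Vs (fun y => p y * Ys y) t 0 r).
    + apply Ball.
    + intros y n _. apply is_derive_Reals. apply (itr_props p Hp).
    + intros y _. intros eps He. destruct (cV y eps He) as [N HN]. exists N. intros n Hn.
      apply (HN (S n)). lia.
    + destruct (proj2_sig (Kf r)) as [HK HKb]. set (K := proj1_sig (Kf r)) in *.
      intros eps He. destruct (uY r (eps / (K + 1))) as [N HN].
      { apply Rdiv_lt_0_compat; lra. }
      exists N. intros n y Hn Hy.
      replace (p y * Ys y - p y * fst (itr p (S n)) y) with (p y * (Ys y - fst (itr p (S n)) y)) by ring.
      rewrite Rabs_mult.
      assert (Hy' : -r <= y <= r).
      { unfold Boule in Hy. rewrite Rminus_0_r in Hy. apply Rabs_lt_between in Hy. lra. }
      pose proof (HKb y Hy'). pose proof (HN n y Hn Hy).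
      apply Rle_lt_trans with (K * (eps / (K + 1))).
      apply Rmult_le_compat. apply Rabs_pos. apply Rabs_pos. lra. lra.
      replace eps with ((K+1) * (eps/(K+1))) at 2 by (field; lra).
      apply Rmult_lt_compat_r. apply Rdiv_lt_0_compat; lra. lra.
    + intros y _. apply (continuity_pt_mult p Ys). apply continuity_pt_filterlim, Hp. apply cYs.
  - apply (UL_sequence (fun n => fst (itr p (S n)) 0)). apply cY.
    intros eps He. exists 0%nat. intros n _. rewrite itrY0. unfold Rdist. rewrite Rminus_0_r, Rabs_R0. lra.
  - apply (UL_sequence (fun n => snd (itr p (S n)) 0)). apply cV.
    intros eps He. exists 0%nat. intros n _. rewrite itrV0. unfold Rdist. rewrite Rminus_diag, Rabs_R0. lra.
Qed.


Definition sol (p y v : R -> R) := (forall t, is_derive y t (v t)) /\ (forall t, is_derive v t (p t * y t)).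

Lemma lin_uniq (p : R -> R) (Hp : forall x, continuous p x) y1 v1 y2 v2 t0 :
  sol p y1 v1 -> sol p y2 v2 -> y1 t0 = y2 t0 -> v1 t0 = v2 t0 -> forall t, y1 t = y2 t.
Proof.
  intros [Ha1 Hb1] [Ha2 Hb2] E1 E2 t.
  assert (H : forall s, y1 (t0 + s) - y2 (t0 + s) = 0).
  { apply (uniq2 (fun s => y1 (t0 + s) - y2 (t0 + s)) (fun s => v1 (t0 + s) - v2 (t0 + s))
       (fun s => p (t0 + s) * (y1 (t0 + s) - y2 (t0 + s)))).
    - intros s. apply is_derive_Reals. apply derivable_pt_lim_minus; apply is_derive_Reals.
      apply (deriv_shift y1 v1). apply Ha1. apply (deriv_shift y2 v2). apply Ha2.
    - intros s. apply is_derive_Reals.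
      replace (p (t0 + s) * (y1 (t0 + s) - y2 (t0 + s))) with
        (p (t0 + s) * y1 (t0 + s) - p (t0 + s) * y2 (t0 + s)) by ring.
      apply derivable_pt_lim_minus; apply is_derive_Reals.
      apply (deriv_shift v1 (fun x => p x * y1 x)). apply Hb1.
      apply (deriv_shift v2 (fun x => p x * y2 x)). apply Hb2.
    - intros T HT. destruct (Kexists p Hp (Rabs t0 + T)) as [K [HK HKb]].
      exists K. split; auto. intros s Hs. rewrite Rabs_mult.
      apply Rmult_le_compat_r. apply Rabs_pos. apply HKb.
      pose proof (Rle_abs t0). pose proof (Rle_abs (-t0)). rewrite Rabs_Ropp in *. lra.
    - rewrite Rplus_0_r. lra.
    - rewrite Rplus_0_r. lra. }
  specialize (H (t - t0)). replace (t0 + (t - t0)) with t in H by ring. lra.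
Qed.

Lemma zero_sol p : sol p (fun _ => 0) (fun _ => 0).
Proof.
  split; intros t; apply is_derive_Reals.
  apply derivable_pt_lim_const. rewrite Rmult_0_r. apply derivable_pt_lim_const.
Qed.

Lemma no_interior_zero (p : R -> R) (Hp : forall x, continuous p x) y v a b t0 :
  sol p y v -> v 0 = 1 -> (forall t, a <= t <= b -> 0 <= y t) -> a < t0 < b -> y t0 = 0 -> False.
Proof.
  intros [Hy Hv] Hv0 Hpos Ht0 Hz.
  assert (Hd : v t0 = 0).
  { assert (pr : derivable_pt y t0) by (exists (v t0); apply is_derive_Reals, Hy).
    rewrite <- (deriv_minimum y a b t0 pr); try lra.
    symmetry. apply derive_pt_eq_0. apply is_derive_Reals, Hy.
    intros x Hx1 Hx2. rewrite Hz. apply Hpos; lra. }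
  assert (E : forall t, y t = 0).
  { intros t. apply (lin_uniq p Hp y v (fun _ => 0) (fun _ => 0) t0); auto. split; auto. apply zero_sol. }
  assert (H0 : is_derive (fun _ : R => 0) 0 1).
  { rewrite <- Hv0. apply (is_derive_ext y). auto. apply Hy. }
  apply is_derive_unique in H0. rewrite Derive_const in H0. lra.
Qed.


Lemma exp_le x y : x <= y -> exp x <= exp y.
Proof. intros H. destruct (Req_dec x y). subst; lra. left; apply exp_increasing; lra. Qed.

Lemma sq_pos_ge (a b : R) : 0 <= 2 * (a * b) + (a - b) * (a - b) - (a * a + b * b) + 0.
Proof. nra. Qed.

Lemma energy_bound p y v B T : sol p y v -> y 0 = 0 -> v 0 = 1 -> 0 <= B ->
  (forall t, 0 <= t <= T -> Rabs (p t) <= B) ->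
  forall t, 0 <= t <= T -> y t * y t + v t * v t <= exp ((B + 1) * T).
Proof.
  intros [Hy Hv] Hy0 Hv0 HB Hp t Ht.
  pose proof (gronwall (fun s => y s * y s + v s * v s)
     (fun s => 2 * (y s * v s) + 2 * (v s * (p s * y s))) (B + 1) 0 T) as G.
  assert (HG : y t * y t + v t * v t + 0 / (B+1) <=
      (y 0 * y 0 + v 0 * v 0 + 0 / (B+1)) * exp ((B+1) * t)).
  { apply G; auto. lra.
    - intros s Hs. auto_derive. split. exists (v s); apply Hy. split. exists (v s); apply Hy.
      split; [exists (p s * y s); apply Hv|]. split; [exists (p s * y s); apply Hv|]. exact I.
      der_rw (Hy s). der_rw (Hv s). ring.
    - intros s Hs.
      assert (Hb : Rabs (p s * y s) <= B * Rabs (y s)).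
      { rewrite Rabs_mult. apply Rmult_le_compat_r. apply Rabs_pos. auto. }
      pose proof (abs_prod_bound (y s) (p s * y s) B HB Hb (v s)).
      pose proof (Rle_0_sqr (y s - v s)) as Hs2; unfold Rsqr in Hs2. nra. }
  rewrite Hy0, Hv0 in HG. replace (0 / (B + 1)) with 0 in HG by (unfold Rdiv; ring).
  assert (exp ((B + 1) * t) <= exp ((B + 1) * T)) by (apply exp_le; nra).
  lra.
Qed.

Lemma lip_bound p1 p2 y1 v1 y2 v2 B Y2 d T : sol p1 y1 v1 -> sol p2 y2 v2 ->
  y1 0 = y2 0 -> v1 0 = v2 0 -> 0 <= B ->
  (forall t, 0 <= t <= T -> Rabs (p1 t) <= B /\ p1 t - p2 t = d /\ y2 t * y2 t <= Y2) ->
  forall t, 0 <= t <= T -> (y1 t - y2 t) * (y1 t - y2 t) <= d * d * Y2 / (B + 2) * exp ((B + 2) * T).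
Proof.
  intros [Hy1 Hv1] [Hy2 Hv2] E1 E2 HB Hp t Ht.
  set (w := fun s => y1 s - y2 s). set (w1 := fun s => v1 s - v2 s).
  pose proof (gronwall (fun s => w s * w s + w1 s * w1 s)
     (fun s => 2 * (w s * w1 s) + 2 * (w1 s * (p1 s * y1 s - p2 s * y2 s))) (B + 2) (d * d * Y2) T) as G.
  assert (HG : w t * w t + w1 t * w1 t + d * d * Y2 / (B+2) <=
      (w 0 * w 0 + w1 0 * w1 0 + d * d * Y2 / (B+2)) * exp ((B+2) * t)).
  { apply G; auto. lra.
    - intros s Hs. unfold w, w1. auto_derive.
      repeat split; first [exists (v1 s); apply Hy1 | exists (v2 s); apply Hy2 |
         exists (p1 s * y1 s); apply Hv1 | exists (p2 s * y2 s); apply Hv2 | idtac].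
      der_rw (Hy1 s). der_rw (Hy2 s). der_rw (Hv1 s). der_rw (Hv2 s). ring.
    - intros s Hs. destruct (Hp s Hs) as [Hb [Hd HY]].
      replace (p1 s * y1 s - p2 s * y2 s) with (p1 s * w s + d * y2 s).
      2:{ unfold w. rewrite <- Hd. ring. }
      assert (Hb' : Rabs (p1 s * w s) <= B * Rabs (w s)).
      { rewrite Rabs_mult. apply Rmult_le_compat_r. apply Rabs_pos. auto. }
      pose proof (abs_prod_bound (w s) (p1 s * w s) B HB Hb' (w1 s)).
      pose proof (Rle_0_sqr (w s - w1 s)) as Hs2; unfold Rsqr in Hs2.
      pose proof (Rle_0_sqr (w1 s - d * y2 s)) as Hs3; unfold Rsqr in Hs3.
      assert (d * d * (y2 s * y2 s) <= d * d * Y2) by (apply Rmult_le_compat_l; nra).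
      nra. }
  unfold w, w1 in HG. rewrite E1, E2 in HG.
  assert (exp ((B + 2) * t) <= exp ((B + 2) * T)) by (apply exp_le; nra).
  assert (0 <= d * d * Y2 / (B + 2)).
  { apply Rmult_le_pos. assert (0 <= Y2). { destruct (Hp 0 ltac:(lra)) as [_ [_ H0]]. nra. } nra.
    left; apply Rinv_0_lt_compat; lra. }
  assert (0 <= w1 t * w1 t) by nra. unfold w in *.
  replace (y2 0 - y2 0) with 0 in HG by ring. replace (v2 0 - v2 0) with 0 in HG by ring.
  set (C := d * d * Y2 / (B + 2)) in *.
  assert (C * exp ((B + 2) * t) <= C * exp ((B + 2) * T)) by (apply Rmult_le_compat_l; auto).
  pose proof (Rle_0_sqr (y1 t - y2 t)) as Hq; unfold Rsqr in Hq.
  rewrite !Rmult_0_l, !Rplus_0_l in HG. unfold w1 in *. lra.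
Qed.

Lemma near_zero p y v B Y T : sol p y v -> y 0 = 0 -> v 0 = 1 -> 0 <= B -> 0 <= Y ->
  (forall t, 0 <= t <= T -> Rabs (p t) <= B /\ Rabs (y t) <= Y) ->
  forall t, 0 < t <= T -> t * (B * Y) <= 1/2 -> 0 < y t.
Proof.
  intros [Hy Hv] Hy0 Hv0 HB HY Hb t Ht Hsm.
  assert (Hv1 : forall s, 0 <= s <= t -> 1/2 <= v s).
  { intros s Hs.
    assert (A : Rabs (v s - 1) <= B * Y * Rabs s ^ 1 / INR (fact 1)).
    { apply (deriv_bound (fun u => v u - 1) (fun u => p u * y u)).
      rewrite Hv0; ring.
      intros u Hu. apply is_derive_Reals. rewrite <- (Rminus_0_r (p u * y u)).
      apply derivable_pt_lim_minus. apply is_derive_Reals, Hv. apply derivable_pt_lim_const.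
      intros u Hu. rewrite Rmin_left, Rmax_right in Hu by lra.
      destruct (Hb u ltac:(lra)) as [H1 H2]. simpl. rewrite Rabs_mult.
      replace (B * Y * 1 / 1) with (B * Y) by field.
      apply Rmult_le_compat; auto; apply Rabs_pos. }
    simpl in A. rewrite (Rabs_pos_eq s) in A by lra.
    replace (B * Y * (s * 1) / 1) with (s * (B * Y)) in A by field.
    apply Rabs_le_between in A.
    assert (s * (B * Y) <= t * (B * Y)) by (apply Rmult_le_compat_r; nra).
    lra. }
  assert (M : y 0 - 0 / 2 <= y t - t / 2).
  { apply (mono_deriv (fun u => y u - u / 2) (fun u => v u - 1/2)). lra.
    intros x Hx. apply is_derive_Reals. apply derivable_pt_lim_minus. apply is_derive_Reals, Hy.
    replace (1/2) with (/2 * 1) by field. 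
    apply (derivable_pt_lim_ext (fun u => /2 * u)). intros; field.
    apply derivable_pt_lim_scal, derivable_pt_lim_id.
    intros x Hx. pose proof (Hv1 x Hx). lra. }
  lra.
Qed.

Lemma sol_cont_y p y v : sol p y v -> continuity y.
Proof.
  intros [Hy _] x. apply continuity_pt_filterlim. apply (deriv_cont y v). apply Hy.
Qed.

Lemma pos_large (p : R -> R) (Hp : forall x, continuous p x) y v T : sol p y v -> y 0 = 0 -> v 0 = 1 ->
  (forall t, 0 <= t <= T -> 0 <= p t) -> forall t, 0 < t <= T -> 0 < y t.
Proof.
  intros Hs Hy0 Hv0 Hpp t Ht. pose proof Hs as [Hy Hv].
  assert (G : forall u, 0 <= u <= T -> 0 <= y u * v u).
  { intros u Hu. replace 0 with (y 0 * v 0) by (rewrite Hy0; ring).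
    apply (mono_deriv (fun u => y u * v u) (fun u => v u * v u + p u * (y u * y u))). lra.
    intros x Hx. auto_derive. split. exists (v x); apply Hy. split. exists (p x * y x); apply Hv. exact I.
    der_rw (Hy x). der_rw (Hv x). ring.
    intros x Hx. pose proof (Hpp x ltac:(lra)). nra. }
  assert (Sq : forall a b, 0 <= a -> a <= b -> b <= T -> y a * y a <= y b * y b).
  { intros a b Ha Hab HbT. apply (mono_deriv (fun u => y u * y u) (fun u => 2 * (y u * v u))). lra.
    intros x Hx. auto_derive. split. exists (v x); apply Hy. split. exists (v x); apply Hy. exact I. der_rw (Hy x). ring.
    intros x Hx. pose proof (G x ltac:(lra)). lra. }
  destruct (Kexists p Hp T) as [B [HB HBb]].
  assert (Hyc : forall x, continuous y x) by (intros x; apply (deriv_cont y v); apply Hy).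
  destruct (Kexists y Hyc T) as [Y [HY HYb]].
  set (t1 := Rmin t (1 / (2 * (B * Y + 1)))).
  assert (Ht1 : 0 < t1 <= t).
  { unfold t1. split. apply Rmin_pos. lra. apply Rdiv_lt_0_compat. lra. nra. apply Rmin_l. }
  assert (Hy1 : 0 < y t1).
  { apply (near_zero p y v B Y T Hs Hy0 Hv0 HB HY).
    intros s Hs'. split; [apply HBb | apply HYb]; lra. lra.
    assert (t1 <= 1 / (2 * (B * Y + 1))) by apply Rmin_r.
    assert (0 <= B * Y) by nra.
    apply Rle_trans with (1 / (2 * (B * Y + 1)) * (B * Y)). apply Rmult_le_compat_r; lra.
    apply (Rmult_le_reg_l (2 * (B * Y + 1))). nra.
    field_simplify; nra. }
  destruct (Rlt_le_dec 0 (y t)) as [Hpos|Hneg]; auto.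
  destruct (IVT_cor y t1 t (sol_cont_y p y v Hs) ltac:(lra)) as [z [Hz Hz0]].
  { nra. }
  pose proof (Sq t1 z ltac:(lra) ltac:(lra) ltac:(lra)). rewrite Hz0 in H. nra.
Qed.


Lemma cont_pl (q : R -> R) D lam : (forall x, continuous q x) -> forall x, continuous (fun t => (lam - q t) / D) x.
Proof.
  intros Hq x. apply continuity_pt_filterlim.
  apply (continuity_pt_ext (fun t => (lam - q t) * / D)). intros; reflexivity.
  apply (continuity_pt_mult (fun t => lam - q t) (fun _ => / D)).
  apply (continuity_pt_minus (fun _ => lam) q). apply continuity_pt_const. intros a b; reflexivity.
  apply continuity_pt_filterlim, Hq. apply continuity_pt_const. intros a b; reflexivity.
Qed.

Lemma shoot (q : R -> R) (D : R) (HD : 0 < D) (Hq : forall x, continuous q x)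
  (y0 v0 : R -> R) (s : R) :
  sol (fun t => (0 - q t) / D) y0 v0 -> y0 0 = 0 -> v0 0 = 1 -> 0 < s < 1/2 -> y0 s = 0 ->
  exists lam y v, 0 < lam /\ sol (fun t => (lam - q t) / D) y v /\ y 0 = 0 /\ v 0 = 1 /\ y (1/2) = 0.
Proof.
  intros Hs0 Hy00 Hv00 Hs Hys.
  set (pl := fun lam t => (lam - q t) / D).
  assert (Hpl : forall lam x, continuous (pl lam) x) by (intros; apply cont_pl; auto).
  assert (Ex : forall lam, exists yv : (R -> R) * (R -> R), sol (pl lam) (fst yv) (snd yv) /\ fst yv 0 = 0 /\ snd yv 0 = 1).
  { intros lam. destruct (ode_exists (pl lam) (Hpl lam)) as [y [v [H1 [H2 [H3 H4]]]]].
    exists (y, v). split; [split; assumption | split; assumption]. }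
  set (F := fun lam => proj1_sig (constructive_indefinite_description _ (Ex lam))).
  assert (HF : forall lam, sol (pl lam) (fst (F lam)) (snd (F lam)) /\ fst (F lam) 0 = 0 /\ snd (F lam) 0 = 1).
  { intros lam. exact (proj2_sig (constructive_indefinite_description _ (Ex lam))). }
  set (Y := fun lam => fst (F lam)).
  destruct (Kexists q Hq (1/2)) as [Kq [HKq HKqb]].
  set (L := Kq + 1).
  set (B := (L + Kq) / D).
  assert (HB : 0 <= B) by (unfold B, L; apply Rmult_le_pos; [lra | left; apply Rinv_0_lt_compat; lra]).
  assert (Hpb : forall lam t, 0 <= lam <= L -> 0 <= t <= 1/2 -> Rabs (pl lam t) <= B).
  { intros lam t Hl Ht. unfold pl, B. unfold Rdiv. rewrite Rabs_mult, (Rabs_pos_eq (/ D)).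
    apply Rmult_le_compat_r. left; apply Rinv_0_lt_compat; lra.
    pose proof (HKqb t ltac:(lra)). apply Rabs_le_between in H. apply Rabs_le. lra.
    left; apply Rinv_0_lt_compat; lra. }
  set (Y2 := exp ((B + 1) * (1/2))).
  assert (HY2 : 1 <= Y2).
  { unfold Y2. pose proof (exp_le 0 ((B + 1) * (1/2)) ltac:(lra)) as He. rewrite exp_0 in He. exact He. }
  assert (Hyb : forall lam t, 0 <= lam <= L -> 0 <= t <= 1/2 -> Y lam t * Y lam t <= Y2 /\ Rabs (Y lam t) <= Y2).
  { intros lam t Hl Ht. destruct (HF lam) as [Hsl [H0 H1]].
    pose proof (energy_bound (pl lam) (fst (F lam)) (snd (F lam)) B (1/2) Hsl H0 H1 HB
       (fun t Ht => Hpb lam t Hl Ht) t Ht) as E.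
    fold Y2 in E. fold (Y lam) in E.
    assert (Hsq : Y lam t * Y lam t <= Y2) by nra. split; auto.
    destruct (Rle_dec (Rabs (Y lam t)) 1). lra.
    assert (Rabs (Y lam t) * Rabs (Y lam t) = Y lam t * Y lam t) by (rewrite <- Rabs_mult; apply Rabs_pos_eq; nra).
    nra. }
  set (delta := Rmin (1/2) (1 / (2 * (B * Y2 + 1)))).
  assert (Hdelta : 0 < delta <= 1/2).
  { unfold delta. split. apply Rmin_pos. lra. apply Rdiv_lt_0_compat. lra. nra. apply Rmin_l. }
  assert (NZ : forall lam t, 0 <= lam <= L -> 0 < t <= delta -> 0 < Y lam t).
  { intros lam t Hl Ht. destruct (HF lam) as [Hsl [H0 H1]].
    apply (near_zero (pl lam) (fst (F lam)) (snd (F lam)) B Y2 (1/2) Hsl H0 H1 HB). lra.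
    intros u Hu. split. apply Hpb; auto. apply Hyb; auto. lra.
    assert (t <= 1 / (2 * (B * Y2 + 1))) by (apply Rle_trans with delta; [lra|apply Rmin_r]).
    assert (0 <= B * Y2) by nra.
    apply Rle_trans with (1 / (2 * (B * Y2 + 1)) * (B * Y2)). apply Rmult_le_compat_r; lra.
    apply (Rmult_le_reg_l (2 * (B * Y2 + 1))). nra.
    field_simplify; nra. }
  set (Cl := Y2 / (D * D) / (B + 2) * exp ((B + 2) * (1/2))).
  assert (HCl : 0 <= Cl).
  { unfold Cl. apply Rmult_le_pos. apply Rmult_le_pos. apply Rmult_le_pos. lra.
    left; apply Rinv_0_lt_compat; nra. left; apply Rinv_0_lt_compat; lra. left; apply exp_pos. }
  assert (LIP : forall lam mu t, 0 <= lam <= L -> 0 <= mu <= L -> 0 <= t <= 1/2 ->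
     (Y lam t - Y mu t) * (Y lam t - Y mu t) <= (lam - mu) * (lam - mu) * Cl).
  { intros lam mu t Hl Hm Ht. destruct (HF lam) as [Hsl [H0 H1]]. destruct (HF mu) as [Hsm [H0' H1']].
    pose proof (lip_bound (pl lam) (pl mu) (fst (F lam)) (snd (F lam)) (fst (F mu)) (snd (F mu))
       B Y2 ((lam - mu) / D) (1/2) Hsl Hsm ltac:(congruence) ltac:(congruence) HB) as Hl2.
    assert (Hc : (lam - mu) / D * ((lam - mu) / D) * Y2 / (B + 2) * exp ((B + 2) * (1 / 2)) = (lam - mu) * (lam - mu) * Cl).
    { unfold Cl. field. split; lra. }
    rewrite <- Hc. apply Hl2; auto.
    intros u Hu. split. apply Hpb; auto. split. unfold pl. field. lra. apply Hyb; auto. }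
  set (Pos := fun lam => forall t, 0 < t <= 1/2 -> 0 < Y lam t).
  assert (HL : 0 < L) by (unfold L; lra).
  assert (PL : Pos L).
  { intros t Ht. destruct (HF L) as [Hsl [H0 H1]].
    apply (pos_large (pl L) (Hpl L) (fst (F L)) (snd (F L)) (1/2) Hsl H0 H1); auto.
    intros u Hu. unfold pl. apply Rmult_le_pos. pose proof (HKqb u ltac:(lra)).
    apply Rabs_le_between in H. unfold L. lra. left; apply Rinv_0_lt_compat; lra. }
  assert (Y0eq : forall t, Y 0 t = y0 t).
  { intros t. destruct (HF 0) as [Hsl [H0 H1]].
    apply (lin_uniq (pl 0) (Hpl 0) (fst (F 0)) (snd (F 0)) y0 v0 0 Hsl Hs0); congruence. }
  set (E := fun x => 0 <= x <= L /\ forall mu, 0 <= mu <= L -> Pos mu -> x <= mu).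
  assert (Eb : bound E) by (exists L; intros x [Hx _]; lra).
  assert (Ene : exists x, E x).
  { exists 0. split. lra. intros mu Hmu _. lra. }
  destruct (completeness E Eb Ene) as [ls [Hub Hlub]].
  assert (F1 : 0 <= ls <= L).
  { split. apply Hub. split. lra. intros mu Hmu _. lra.
    apply Hlub. intros x [Hx _]. lra. }
  assert (F2 : forall mu, 0 <= mu <= L -> Pos mu -> ls <= mu).
  { intros mu Hmu Pm. apply Hlub. intros x [Hx Hx2]. apply Hx2; auto. }
  assert (F3 : forall eps, 0 < eps -> exists mu, 0 <= mu <= L /\ Pos mu /\ mu < ls + eps).
  { intros eps He. apply NNPP. intros Hn.
    assert (Hall : forall mu, 0 <= mu <= L -> Pos mu -> ls + eps <= mu).
    { intros mu Hmu Pm. destruct (Rle_dec (ls + eps) mu) as [|Hlt]; auto.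
      exfalso. apply Hn. exists mu. repeat split; auto; lra. }
    assert (Ex1 : E (Rmin (ls + eps) L)).
    { split. split. apply Rmin_glb; lra. apply Rmin_r.
      intros mu Hmu Pm. apply Rle_trans with (ls + eps). apply Rmin_l. apply Hall; auto. }
    pose proof (Hub _ Ex1). pose proof (Hall L ltac:(lra) PL).
    unfold Rmin in H. destruct (Rle_dec (ls + eps) L); lra. }
  assert (F4 : forall t, 0 <= t <= 1/2 -> 0 <= Y ls t).
  { intros t Ht. destruct (Req_dec t 0) as [Ht0|Ht0].
    { subst t. destruct (HF ls) as [_ [H0 _]]. unfold Y. lra. }
    apply Rnot_lt_le. intros Hneg. set (a := Y ls t) in *.
    set (eps := Rmin 1 (a * a / (Cl + 1))).
    assert (Heps : 0 < eps).
    { unfold eps. apply Rmin_pos. lra. apply Rdiv_lt_0_compat; nra. }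
    destruct (F3 eps Heps) as [mu [Hmu [Pm Hlt]]].
    pose proof (F2 mu Hmu Pm).
    pose proof (Pm t ltac:(lra)).
    pose proof (LIP mu ls t Hmu F1 Ht). fold a in H1.
    assert (Hd : (mu - ls) * (mu - ls) * Cl <= eps * Cl).
    { apply Rmult_le_compat_r; auto.
      assert (eps <= 1) by apply Rmin_l. nra. }
    assert (Hd2 : eps * Cl < a * a).
    { assert (eps <= a * a / (Cl + 1)) by apply Rmin_r.
      apply Rle_lt_trans with (a * a / (Cl + 1) * Cl). apply Rmult_le_compat_r; auto.
      apply (Rmult_lt_reg_l (Cl + 1)). lra. field_simplify; nra. }
    nra. }
  assert (F5 : ~ Pos ls).
  { intros Pl. destruct (Req_dec ls 0) as [Hl0|Hl0].
    - rewrite Hl0 in Pl. pose proof (Pl s ltac:(lra)). rewrite Y0eq in H. lra.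
    - assert (Hcont : forall c, delta <= c <= 1/2 -> continuity_pt (Y ls) c).
      { intros c _. destruct (HF ls) as [Hsl _]. apply (sol_cont_y _ _ _ Hsl). }
      destruct (continuity_ab_min (Y ls) delta (1/2) ltac:(lra) Hcont) as [m0 [Hm0 Hm0i]].
      set (m := Y ls m0).
      assert (Hm : 0 < m) by (apply Pl; lra).
      set (eta := Rmin (Rmin ls 1) (m * m / (Cl + 1))).
      assert (Heta : 0 < eta).
      { unfold eta. apply Rmin_pos. apply Rmin_pos; lra. apply Rdiv_lt_0_compat; nra. }
      assert (Heta1 : eta <= ls) by (apply Rle_trans with (Rmin ls 1); [apply Rmin_l|apply Rmin_l]).
      assert (Heta2 : eta <= 1) by (apply Rle_trans with (Rmin ls 1); [apply Rmin_l|apply Rmin_r]).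
      assert (Heta3 : eta <= m * m / (Cl + 1)) by apply Rmin_r.
      assert (Hsm : eta * eta * Cl < m * m).
      { apply Rle_lt_trans with (eta * Cl). apply Rmult_le_compat_r; auto. nra.
        apply Rle_lt_trans with (m * m / (Cl + 1) * Cl). apply Rmult_le_compat_r; auto.
        apply (Rmult_lt_reg_l (Cl + 1)). lra. field_simplify; nra. }
      assert (Pl' : Pos (ls - eta)).
      { intros t Ht. destruct (Rle_dec t delta) as [Htd|Htd].
        - apply NZ; lra.
        - pose proof (LIP (ls - eta) ls t ltac:(lra) F1 ltac:(lra)).
          pose proof (Hm0 t ltac:(lra)). fold m in H0.
          replace (ls - eta - ls) with (- eta) in H by ring.
          apply Rnot_le_lt. intros Hn. nra. }
      pose proof (F2 (ls - eta) ltac:(lra) Pl'). lra. }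
  assert (F6 : exists t0, 0 < t0 <= 1/2 /\ Y ls t0 = 0).
  { apply NNPP. intros Hn. apply F5. intros t Ht.
    destruct (Rlt_le_dec 0 (Y ls t)) as [|Hle]; auto. exfalso. apply Hn. exists t. split; auto.
    pose proof (F4 t ltac:(lra)). lra. }
  destruct F6 as [t0 [Ht0 Hz]].
  destruct (HF ls) as [Hsl [H0 H1]].
  assert (Ht0' : t0 = 1/2).
  { destruct (Req_dec t0 (1/2)) as [|Hne]; auto. exfalso.
    apply (no_interior_zero (pl ls) (Hpl ls) (fst (F ls)) (snd (F ls)) 0 (1/2) t0 Hsl H1); auto.
    lra. }
  assert (Hls : 0 < ls).
  { destruct (Req_dec ls 0) as [Hl0|Hl0]; [|lra]. exfalso.
    apply (no_interior_zero (pl 0) (Hpl 0) y0 v0 0 (1/2) s Hs0 Hv00); auto.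
    intros t Ht. rewrite <- Y0eq. replace (Y 0 t) with (Y ls t) by (rewrite Hl0; reflexivity). apply F4; auto. }
  exists ls, (fst (F ls)), (snd (F ls)). split; [exact Hls|]. split; [exact Hsl|].
  split; [exact H0|]. split; [exact H1|]. unfold Y in Hz; rewrite Ht0' in Hz; exact Hz.
Qed.


Lemma C_deriv (f : R -> R) x l : is_derive f x l ->
  @is_derive R_AbsRing C_R_NormedModule (fun x => RtoC (f x)) x (RtoC l).
Proof.
  intros H.
  pose proof (@is_derive_scal_l R_AbsRing C_R_NormedModule f x l (RtoC 1) H) as H2.
  replace (RtoC l) with (scal l (RtoC 1)).
  apply (is_derive_ext _ _ _ _ (fun t => eq_refl _)) in H2.
  eapply is_derive_ext; [|exact H2]. intros t. simpl.
  unfold scal; simpl. unfold prod_scal; simpl. unfold RtoC. unfold scal; simpl. unfold mult; simpl. f_equal; ring.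
  unfold scal; simpl. unfold prod_scal; simpl. unfold RtoC. unfold scal; simpl. unfold mult; simpl. f_equal; ring.
Qed.

Lemma CInt_real (h : R -> R) : (forall x, continuous h x) ->
  CInt01 (fun y => RtoC (h y)) = RtoC (RInt h 0 1).
Proof.
  intros Hc. unfold CInt01.
  apply (@is_RInt_unique C_R_CompleteNormedModule).
  apply (@is_RInt_fct_extend_pair R_NormedModule R_NormedModule (fun y => RtoC (h y)) 0 1 (RInt h 0 1) 0).
  - simpl. apply (@RInt_correct R_CompleteNormedModule).
    apply (@ex_RInt_continuous R_CompleteNormedModule). intros; apply Hc.
  - simpl. apply (is_RInt_ext (fun _ => 0)). intros; reflexivity.
    replace 0 with (scal (1 - 0) 0) at 2. apply (@is_RInt_const R_NormedModule).
    unfold scal; simpl; unfold mult; simpl; ring.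
Qed.

Lemma const_deriv (f : R -> R) : (forall x : R, is_derive f x 0) -> forall a b, f a = f b.
Proof.
  intros H.
  assert (forall a b, a <= b -> f a = f b).
  { intros a b Hab. apply Rle_antisym.
    apply (mono_deriv f (fun _ => 0)); auto; intros; lra.
    assert (- f a <= - f b).
    { apply (mono_deriv (fun x => - f x) (fun _ => 0)); auto. intros x _.
      apply is_derive_Reals. replace 0 with (- 0) by ring. apply derivable_pt_lim_opp.
      apply is_derive_Reals, H. intros; lra. }
    lra. }
  intros a b. destruct (Rle_dec a b). auto. symmetry. apply H0. lra.
Qed.

Lemma int_zero (g : R -> R) (x0 : R) : (forall x, continuous g x) ->
  (forall t, g (t + 1) = g t) -> (forall t, g (- t) = - g t) ->
  RInt (fun x => g (x - x0)) 0 1 = 0.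
Proof.
  intros Hc Hper Hodd.
  set (h := fun x => g (x - x0)).
  assert (Hhc : forall x, continuous h x).
  { intros x. unfold h. apply (continuous_comp (fun x => x - x0) g).
    apply (@continuous_minus R_UniformSpace R_AbsRing R_NormedModule (fun x => x) (fun _ => x0)).
    apply continuous_id. apply continuous_const. apply Hc. }
  set (I := fun t => RInt h 0 t).
  assert (HI : forall t, is_derive I t (h t)) by (apply deriv_int; auto).
  assert (Hper' : forall t, h (t + 1) = h t).
  { intros t; unfold h. replace (t + 1 - x0) with ((t - x0) + 1) by ring. apply Hper. }
  assert (C1 : forall a b, I (1 + a) - I a = I (1 + b) - I b).
  { apply (const_deriv (fun a => I (1 + a) - I a)). intros x.
    apply is_derive_Reals. replace 0 with (h (1 + x) - h x) by (rewrite Rplus_comm, Hper'; ring).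
    apply derivable_pt_lim_minus.
    apply is_derive_Reals. apply (deriv_shift I h 1 x). apply HI.
    apply is_derive_Reals, HI. }
  assert (C2 : forall r, I (x0 + r) - I (x0 - r) = I (x0 + 0) - I (x0 - 0)).
  { intros r. apply (const_deriv (fun r => I (x0 + r) - I (x0 - r))). intros x.
    assert (E0 : h (x0 + x) - h (x0 - x) * (-1) = 0).
    { unfold h. replace (x0 + x - x0) with x by ring. replace (x0 - x - x0) with (- x) by ring.
        rewrite Hodd. ring. }
    apply is_derive_Reals.
    cut (derivable_pt_lim (fun r => I (x0 + r) - I (x0 - r)) x (h (x0 + x) - h (x0 - x) * (-1))).
    { intros Hc2. rewrite E0 in Hc2. exact Hc2. }
    apply derivable_pt_lim_minus.
    apply is_derive_Reals. apply (deriv_shift I h x0 x). apply HI.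
    apply (derivable_pt_lim_comp (fun a => x0 - a) I).
    replace (-1) with (0 - 1) by ring.
    apply (derivable_pt_lim_minus (fun _ => x0) id). apply derivable_pt_lim_const. apply derivable_pt_lim_id.
    apply is_derive_Reals, HI. }
  specialize (C1 0 (x0 - 1/2)). specialize (C2 (1/2)).
  assert (EE : forall z : R, 1 + (z - 1/2) = z + 1/2) by (intros; lra). rewrite EE in C1.
  replace (1 + 0) with 1 in C1 by ring.
  rewrite Rplus_0_r, Rminus_0_r in C2.
  unfold I in *. rewrite RInt_point in C1. change (@zero R_NormedModule) with 0 in C1.
  replace (@zero R_CompleteNormedModule) with 0 in C1 by reflexivity. lra.
Qed.

Lemma exp_lip a b Bu : a <= Bu -> b <= Bu -> Rabs (exp a - exp b) <= exp Bu * Rabs (a - b).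
Proof.
  intros Ha Hb.
  destruct (MVT_gen exp b a exp) as [c [Hc Heq]].
  - intros x _. apply is_derive_Reals, derivable_pt_lim_exp.
  - intros x _. apply derivable_continuous_pt. exists (exp x). apply derivable_pt_lim_exp.
  - rewrite Heq, Rabs_mult, (Rabs_pos_eq (exp c)) by (left; apply exp_pos).
    apply Rmult_le_compat_r. apply Rabs_pos. apply exp_le.
    unfold Rmin, Rmax in Hc. destruct (Rle_dec b a); lra.
Qed.

Lemma nl_uniq (cc D : R) (a a1 b b1 : R -> R) : 0 < D ->
  (forall t, is_derive a t (a1 t)) -> (forall t, is_derive a1 t ((a t - cc * exp (a t)) / D)) ->
  (forall t, is_derive b t (b1 t)) -> (forall t, is_derive b1 t ((b t - cc * exp (b t)) / D)) ->
  a 0 = b 0 -> a1 0 = b1 0 -> forall t, a t = b t.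
Proof.
  intros HD Ha Ha1 Hb Hb1 E0 E1 t.
  assert (H : forall t, a t - b t = 0).
  { apply (uniq2 (fun t => a t - b t) (fun t => a1 t - b1 t)
      (fun t => (a t - cc * exp (a t)) / D - (b t - cc * exp (b t)) / D)).
    - intros s. apply is_derive_Reals. apply derivable_pt_lim_minus; apply is_derive_Reals; auto.
    - intros s. apply is_derive_Reals. apply derivable_pt_lim_minus; apply is_derive_Reals; auto.
    - intros T HT.
      assert (Hac : forall x, continuous a x) by (intros; apply (deriv_cont a a1); auto).
      assert (Hbc : forall x, continuous b x) by (intros; apply (deriv_cont b b1); auto).
      destruct (Kexists a Hac T) as [Ka [HKa HKab]].
      destruct (Kexists b Hbc T) as [Kb [HKb HKbb]].
      exists ((1 + Rabs cc * exp (Ka + Kb)) / D). split.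
      { apply Rmult_le_pos. pose proof (Rabs_pos cc). pose proof (exp_pos (Ka + Kb)). nra.
        left; apply Rinv_0_lt_compat; lra. }
      intros s Hs.
      pose proof (HKab s Hs) as H1. pose proof (HKbb s Hs) as H2.
      apply Rabs_le_between in H1. apply Rabs_le_between in H2.
      pose proof (exp_lip (a s) (b s) (Ka + Kb) ltac:(lra) ltac:(lra)) as EL.
      replace ((a s - cc * exp (a s)) / D - (b s - cc * exp (b s)) / D) with
        (((a s - b s) - cc * (exp (a s) - exp (b s))) * / D) by (field; lra).
      rewrite Rabs_mult, (Rabs_pos_eq (/ D)) by (left; apply Rinv_0_lt_compat; lra).
      assert (Hx : Rabs (a s - b s - cc * (exp (a s) - exp (b s))) <= (1 + Rabs cc * exp (Ka + Kb)) * Rabs (a s - b s)).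
      { eapply Rle_trans. apply Rabs_triang. rewrite Rabs_Ropp, Rabs_mult.
        pose proof (Rabs_pos cc).
        assert (Rabs cc * Rabs (exp (a s) - exp (b s)) <= Rabs cc * (exp (Ka + Kb) * Rabs (a s - b s))).
        { apply Rmult_le_compat_l; auto. }
        lra. }
      assert (Hi : 0 < / D) by (apply Rinv_0_lt_compat; lra).
      apply Rmult_le_compat_r with (r := / D) in Hx; [|lra].
      unfold Rdiv. rewrite Rmult_assoc, (Rmult_comm (/ D)), <- Rmult_assoc. exact Hx.
    - lra.
    - lra. }
  specialize (H t). lra.
Qed.

Lemma deriv_negshift (f f' : R -> R) (a s : R) : is_derive f (a - s) (f' (a - s)) ->
  is_derive (fun s => f (a - s)) s (- f' (a - s)).
Proof.
  intros H. apply is_derive_Reals. apply is_derive_Reals in H.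
  replace (- f' (a - s)) with (f' (a - s) * (0 - 1)) by ring.
  apply (derivable_pt_lim_comp (fun s => a - s) f); auto.
  apply (derivable_pt_lim_minus (fun _ => a) id). apply derivable_pt_lim_const. apply derivable_pt_lim_id.
Qed.

Lemma deriv_sub (f f' : R -> R) (a s : R) : is_derive f (s - a) (f' (s - a)) ->
  is_derive (fun s => f (s - a)) s (f' (s - a)).
Proof.
  intros H. apply is_derive_Reals. apply is_derive_Reals in H.
  replace (f' (s - a)) with (f' (s - a) * (1 - 0)) by ring.
  apply (derivable_pt_lim_comp (fun s => s - a) f); auto.
  apply (derivable_pt_lim_minus id (fun _ => a)). apply derivable_pt_lim_id. apply derivable_pt_lim_const.
Qed.


Theorem mainTheorem10 (D kappa : R) (U : R -> R) :
  0 < D -> 0 < kappa ->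
  stationary_solution D kappa U ->
  (exists x y, U x <> U y) ->
  (exists x1 x2 x3 : R,
      0 <= x1 < 1 /\ 0 <= x2 < 1 /\ 0 <= x3 < 1 /\
      x1 <> x2 /\ x1 <> x3 /\ x2 <> x3 /\
      Derive U x1 = 0 /\ Derive U x2 = 0 /\ Derive U x3 = 0) ->
  linearly_unstable D kappa U.
Proof.
  intros HD Hk [Hper [HdU [HdU1 Heq]]] [xa [xb Hne]] [x1 [x2 [x3 [Hx1 [Hx2 [Hx3 [H12 [H13 [H23 [Z1 [Z2 Z3]]]]]]]]]]].
  set (M := massU U) in *.
  set (U1 := Derive U). set (U2 := Derive U1).
  set (cc := kappa / M).
  assert (HU : forall x, is_derive U x (U1 x)) by (intros; apply Derive_correct; auto).
  assert (HU1 : forall x, is_derive U1 x (U2 x)) by (intros; apply Derive_correct; auto).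
  assert (HU2e : forall x, U2 x = (U x - cc * exp (U x)) / D).
  { intros x. specialize (Heq x). change (Derive_n U 2 x) with (U2 x) in Heq. unfold cc.
    assert (E : D * U2 x = U x - kappa * exp (U x) / M) by lra.
    replace (U2 x) with ((D * U2 x) * / D) by (field; lra). rewrite E. unfold Rdiv. ring. }
  assert (HU1' : forall x, is_derive U1 x ((U x - cc * exp (U x)) / D)).
  { intros x. rewrite <- HU2e. auto. }
  assert (HUc : forall x, continuous U x) by (intros; apply (deriv_cont U U1); auto).
  assert (Sym : forall x0, U1 x0 = 0 -> forall t, U (x0 + t) = U (x0 - t)).
  { intros x0 Hz. apply (nl_uniq cc D (fun t => U (x0 + t)) (fun t => U1 (x0 + t))
        (fun t => U (x0 - t)) (fun t => - U1 (x0 - t))); auto.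
    - intros t. apply (deriv_shift U U1). auto.
    - intros t. apply (deriv_shift U1 (fun x => (U x - cc * exp (U x)) / D)). auto.
    - intros t. apply (deriv_negshift U U1). auto.
    - intros t. apply is_derive_Reals.
      replace ((U (x0 - t) - cc * exp (U (x0 - t))) / D) with (- - ((U (x0 - t) - cc * exp (U (x0 - t))) / D)) by ring.
      apply derivable_pt_lim_opp. apply is_derive_Reals.
      apply (deriv_negshift U1 (fun x => (U x - cc * exp (U x)) / D)). auto.
    - f_equal; ring.
    - rewrite !Rplus_0_r, !Rminus_0_r, Hz. ring. }
  assert (SymD : forall x0, U1 x0 = 0 -> forall t, U1 (x0 + t) = - U1 (x0 - t)).
  { intros x0 Hz t.
    assert (E : (fun t => U (x0 + t)) = (fun t => U (x0 - t))).
    { apply functional_extensionality. apply Sym; auto. }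
    pose proof (deriv_shift U U1 x0 t (HU _)) as A1.
    pose proof (deriv_negshift U U1 x0 t (HU _)) as A2.
    assert (A1' : is_derive (fun t => U (x0 - t)) t (U1 (x0 + t))).
    { apply (is_derive_ext (fun t => U (x0 + t))). apply Sym; auto. exact A1. }
    apply is_derive_unique in A1'. apply is_derive_unique in A2. congruence. }
  assert (U1per : forall x, U1 (x + 1) = U1 x).
  { intros x. pose proof (deriv_shift U U1 1 x (HU _)) as A.
    assert (E : (fun s => U (1 + s)) = U).
    { apply functional_extensionality. intros s. rewrite Rplus_comm. apply Hper. }
    assert (A' : is_derive U x (U1 (1 + x))).
    { apply (is_derive_ext (fun s => U (1 + s))). intros s. rewrite Rplus_comm. apply Hper. exact A. }
    apply is_derive_unique in A'. pose proof (is_derive_unique _ _ _ (HU x)).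
    rewrite Rplus_comm. congruence. }
  assert (Z1' : U1 x1 = 0) by exact Z1.
  assert (HU2x : U2 x1 <> 0).
  { intros H0. apply Hne.
    assert (C : forall t, U (x1 + t) = U x1).
    { apply (nl_uniq cc D (fun t => U (x1 + t)) (fun t => U1 (x1 + t)) (fun _ => U x1) (fun _ => 0)); auto.
      - intros t. apply (deriv_shift U U1). auto.
      - intros t. apply (deriv_shift U1 (fun x => (U x - cc * exp (U x)) / D)). auto.
      - intros t. apply is_derive_Reals, derivable_pt_lim_const.
      - intros t. rewrite <- HU2e, H0. apply is_derive_Reals, derivable_pt_lim_const.
      - rewrite Rplus_0_r. reflexivity.
      - rewrite Rplus_0_r. exact Z1'. }
    replace xa with (x1 + (xa - x1)) by ring. replace xb with (x1 + (xb - x1)) by ring.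
    rewrite !C. reflexivity. }
  assert (Rel : forall z, 0 <= z < 1 -> z <> x1 -> U1 z = 0 -> exists a, 0 < a < 1 /\ U1 (x1 + a) = 0 /\ U1 (x1 + (1 - a)) = 0 /\ (a = z - x1 \/ a = z - x1 + 1)).
  { intros z Hz Hzx HUz.
    assert (Ha : exists a, 0 < a < 1 /\ U1 (x1 + a) = 0 /\ (a = z - x1 \/ a = z - x1 + 1)).
    { destruct (Rlt_le_dec x1 z).
      - exists (z - x1). split. lra. split. replace (x1 + (z - x1)) with z by ring. auto. auto.
      - exists (z - x1 + 1). split. lra. split. replace (x1 + (z - x1 + 1)) with (z + 1) by ring.
        rewrite U1per. auto. auto. }
    destruct Ha as [a [Ha1 [Ha2 Ha3]]]. exists a. split; auto. split; auto. split; auto.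
    replace (x1 + (1 - a)) with ((x1 - a) + 1) by ring. rewrite U1per.
    rewrite (SymD x1 Z1' a) in Ha2. lra. }
  destruct (Rel x2 Hx2 ltac:(auto) Z2) as [a2 [Ha2 [Ha2z [Ha2z' Ha2e]]]].
  destruct (Rel x3 Hx3 ltac:(auto) Z3) as [a3 [Ha3 [Ha3z [Ha3z' Ha3e]]]].
  assert (Hs : exists s, 0 < s < 1/2 /\ U1 (x1 + s) = 0).
  { assert (a2 <> a3) by (intros E; destruct Ha2e, Ha3e; lra).
    destruct (Rlt_le_dec a2 (1/2)). exists a2; split; auto; lra.
    destruct (Req_dec a2 (1/2)).
    - destruct (Rlt_le_dec a3 (1/2)). exists a3; split; auto; lra.
      exists (1 - a3). split; auto. lra.
    - exists (1 - a2). split; auto. lra. }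
  destruct Hs as [s [Hs Hs0]].
  set (q := fun t => kappa * exp (U (x1 + t)) / M - 1).
  assert (Hqc : forall x, continuous q x).
  { intros x. apply (deriv_cont q (fun x => kappa * (U1 (x1 + x) * exp (U (x1 + x))) / M)).
    unfold q. auto_derive. apply HdU.
    pose proof (HU (x1 + x)) as Hh. der_rw Hh. unfold Rdiv; ring. }
  assert (HU2d : forall x, is_derive U2 x ((U1 x - cc * (U1 x * exp (U x))) / D)).
  { intros x. apply (is_derive_ext (fun x => (U x - cc * exp (U x)) / D)).
    intros t. rewrite HU2e. reflexivity.
    auto_derive. split; [apply HdU|split; [apply HdU|exact I]]. pose proof (HU x) as Hh. der_rw Hh. field. lra. }
  set (c2 := U2 x1).
  set (y0 := fun t => U1 (x1 + t) / c2). set (v0 := fun t => U2 (x1 + t) / c2).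
  assert (Hsol0 : sol (fun t => (0 - q t) / D) y0 v0).
  { split; intros t; apply is_derive_Reals.
    - unfold y0, v0. apply (derivable_pt_lim_ext (fun t => / c2 * U1 (x1 + t))).
      intros; unfold Rdiv; ring.
      replace (U2 (x1 + t) / c2) with (/ c2 * U2 (x1 + t)) by (unfold Rdiv; ring).
      apply derivable_pt_lim_scal. apply is_derive_Reals. apply (deriv_shift U1 U2). auto.
    - unfold y0, v0. apply (derivable_pt_lim_ext (fun t => / c2 * U2 (x1 + t))).
      intros; unfold Rdiv; ring.
      replace ((0 - q t) / D * (U1 (x1 + t) / c2)) with
        (/ c2 * ((U1 (x1 + t) - cc * (U1 (x1 + t) * exp (U (x1 + t)))) / D)).
      2:{ unfold q, cc. unfold Rdiv; ring. }
      apply derivable_pt_lim_scal. apply is_derive_Reals.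
      apply (deriv_shift U2 (fun x => (U1 x - cc * (U1 x * exp (U x))) / D)). auto. }
  destruct (shoot q D HD Hqc y0 v0 s Hsol0) as [lam [y [v [Hlam [[Hy Hv] [Hy0 [Hv0 Hyh]]]]]]].
  { unfold y0. rewrite Rplus_0_r. fold U1 in Z1'. rewrite Z1'. unfold Rdiv; ring. }
  { unfold v0. rewrite Rplus_0_r. fold c2. field. exact HU2x. }
  { exact Hs. }
  { unfold y0. rewrite Hs0. unfold Rdiv; ring. }
  set (p := fun t => (lam - q t) / D).
  assert (Hpc : forall x, continuous p x) by (apply cont_pl; auto).
  assert (Hsol : sol p y v) by (split; auto).
  assert (qsym : forall t, q (- t) = q t).
  { intros t. unfold q. replace (x1 + - t) with (x1 - t) by ring. rewrite <- Sym; auto. }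
  assert (qsym2 : forall t, q (1 - t) = q t).
  { intros t. unfold q. replace (x1 + (1 - t)) with ((x1 - t) + 1) by ring. rewrite Hper.
    rewrite <- Sym; auto. }
  assert (yodd : forall t, y t = - y (- t)).
  { apply (lin_uniq p Hpc y v (fun t => - y (- t)) (fun t => v (- t)) 0 Hsol).
    - split; intros t; apply is_derive_Reals.
      + replace (v (- t)) with (- - v (- t)) by ring. apply derivable_pt_lim_opp.
        apply is_derive_Reals. apply (deriv_refl y v). auto.
      + replace (p t * - y (- t)) with (- (p (- t) * y (- t))).
        2:{ unfold p. rewrite qsym. ring. }
        apply is_derive_Reals. apply (deriv_refl v (fun t => p t * y t)). auto.
    - replace (- 0) with 0 by ring. rewrite Hy0. ring.
    - replace (- 0) with 0 by ring. reflexivity. }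
  assert (yrefl : forall t, y t = - y (1 - t)).
  { apply (lin_uniq p Hpc y v (fun t => - y (1 - t)) (fun t => v (1 - t)) (1/2) Hsol).
    - split; intros t; apply is_derive_Reals.
      + replace (v (1 - t)) with (- - v (1 - t)) by ring. apply derivable_pt_lim_opp.
        apply is_derive_Reals. apply (deriv_negshift y v). auto.
      + replace (p t * - y (1 - t)) with (- (p (1 - t) * y (1 - t))).
        2:{ unfold p. rewrite qsym2. ring. }
        apply is_derive_Reals. apply (deriv_negshift v (fun t => p t * y t)). auto.
    - replace (1 - 1/2) with (1/2) by lra. rewrite Hyh. ring.
    - replace (1 - 1/2) with (1/2) by lra. reflexivity. }
  assert (yper : forall t, y (t + 1) = y t).
  { intros t. rewrite yrefl. replace (1 - (t + 1)) with (- t) by ring. rewrite <- yodd. reflexivity. }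
  assert (Hyc2 : forall x, continuous y x) by (intros; apply (deriv_cont y v); auto).
  pose (g := fun t => exp (U (x1 + t)) * y t).
  assert (Hg0 : RInt (fun x => g (x - x1)) 0 1 = 0).
  { apply (int_zero g x1).
    - intros x. apply (cont_mult (fun t => exp (U (x1 + t))) y); auto.
      apply (deriv_cont _ (fun t => U1 (x1 + t) * exp (U (x1 + t)))).
      auto_derive. apply HdU. pose proof (HU (x1 + x)) as Hh. der_rw Hh. ring.
    - intros t. unfold g. rewrite yper. replace (x1 + (t + 1)) with ((x1 + t) + 1) by ring. rewrite Hper. reflexivity.
    - intros t. unfold g. replace (x1 + - t) with (x1 - t) by ring. rewrite <- Sym; auto.
      rewrite (yodd t). replace (- - t) with t by ring. ring. }
  assert (Hint : RInt (fun x => exp (U x) * y (x - x1)) 0 1 = 0).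
  { transitivity (RInt (fun x => g (x - x1)) 0 1); [|exact Hg0]. apply (@RInt_ext R_CompleteNormedModule).
    intros x _. unfold g. replace (x1 + (x - x1)) with x by ring. reflexivity. }
  exists (RtoC lam). split.
  { rewrite re_RtoC. exact Hlam. }
  exists (fun x => RtoC (y (x - x1))), (fun x => RtoC (v (x - x1))),
         (fun x => RtoC (p (x - x1) * y (x - x1))).
  split; [|split; [|split; [|split]]].
  - intros x. replace (x + 1 - x1) with ((x - x1) + 1) by ring. rewrite yper. reflexivity.
  - apply NNPP. intros Hn.
    assert (Hz : forall t, y t = 0).
    { intros t. apply NNPP. intros Hne0. apply Hn. exists (t + x1).
      replace (t + x1 - x1) with t by ring. intros E. apply Hne0.
      apply (f_equal fst) in E. exact E. }
    pose proof (Hy 0) as H0. rewrite Hv0 in H0.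
    assert (H0' : is_derive (fun _ : R => 0) 0 1) by (apply (is_derive_ext y); auto).
    apply is_derive_unique in H0'. rewrite Derive_const in H0'. lra.
  - intros x. apply C_deriv. apply (deriv_sub y v). auto.
  - intros x. apply C_deriv. apply (deriv_sub v (fun t => p t * y t)). auto.
  - intros x. unfold Lop. cbv beta.
    assert (HI : CInt01 (fun y0 => Cmult (RtoC (exp (U y0))) (RtoC (y (y0 - x1)))) = RtoC 0).
    { assert (EF : (fun y0 => Cmult (RtoC (exp (U y0))) (RtoC (y (y0 - x1)))) =
         (fun y0 => RtoC (exp (U y0) * y (y0 - x1)))).
      { apply functional_extensionality. intros z. rewrite RtoC_mult. reflexivity. }
      rewrite EF. rewrite CInt_real. rewrite Hint. reflexivity.
      intros z. apply (cont_mult (fun z => exp (U z)) (fun z => y (z - x1))).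
      apply (deriv_cont _ (fun t => U1 t * exp (U t))). auto_derive. apply HdU.
      pose proof (HU z) as Hh. der_rw Hh. ring.
      apply (deriv_cont _ (fun t => v (t - x1))). apply (deriv_sub y v). auto. }
    rewrite HI. rewrite <- !RtoC_mult, <- RtoC_plus, <- RtoC_minus. f_equal.
    unfold p, q. replace (x1 + (x - x1)) with x by ring. assert (ED : forall a b, D * (a / D * b) = a * b) by (intros; field; lra). rewrite ED. fold M. ring.
Qed.
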